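(* Let $p$ be a prime. Let $A$ be the classical divided power algebra over $\mathbb Z_{(p)}$ in a variable $y$, regarded as an ungraded ring. Let $\mathbf D$ be the classical divided power algebra over $A$ in a variable $x$, graded by the $x$-degree; equivalently, $\mathbf D$ is the classical divided power algebra over $\mathbb Z_{(p)}$ in two variables $x,y$. Then: - The ideal of $\mathbf D$ generated by $y^{[1]}$ and $x^{[1]}$ is not finitely presented. - $\mathbf D$ is neither graded-coherent (for the $x$-grading) nor coherent. - $\mathbf D$ is not graded-coherent with respect to its bigrading by $(x\text{-degree},y\text{-degree})$.
   Context: The classical divided power algebra over a commutative ring $R$ in a variable $z$ is the $R$-algebra that is free as an $R$-module on basis $z^{[i]}$ ($i\ge0$), with $z^{[n]}z^{[m]}=\binom{n+m}{n}z^{[n+m]}$. In two variables it is the tensor product over $R$ of the one-variable algebras, with basis $x^{[i]}y^{[j]}$. A (graded) ring is (graded-)coherent if every finitely generated (homogeneous) ideal is finitely presented. *)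

(* Defs.v *)
From HB Require Import structures.
From mathcomp Require Import all_boot all_order all_algebra.
Set Implicit Arguments. Unset Strict Implicit. Unset Printing Implicit Defensive.
Import Order.TTheory GRing.Theory Num.Theory.
Local Open Scope ring_scope.

(* Z_(p) realised as the subring of Q of fractions whose (reduced)
   denominator is not divisible by p. *)
Definition inZp (p : nat) (q : rat) : Prop := ~~ (p %| `|denq q|)%N.

(* An element of the two-variable divided power algebra D over Z_(p) is a
   finitely supported family of coefficients c i j in Z_(p), standing for
   \sum c i j x^[i] y^[j]. *)
Definition dpT := nat -> nat -> rat.

Definition inD (p : nat) (f : dpT) : Prop :=
  (forall i j, inZp p (f i j)) /\
  (exists N : nat, forall i j, ((N <= i)%N || (N <= j)%N) -> f i j = 0).

Definition dzero : dpT := fun _ _ => 0.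

Definition deq (f g : dpT) : Prop := forall i j, f i j = g i j.

(* multiplication: x^[a]y^[b] * x^[c]y^[d] = C(a+c,a) C(b+d,b) x^[a+c]y^[b+d] *)
Definition dmul (f g : dpT) : dpT := fun i j =>
  \sum_(a < i.+1) \sum_(b < j.+1)
     ('C(i, a) * 'C(j, b))%:R * f a b * g (i - a)%N (j - b)%N.

Definition x1 : dpT := fun i j => if (i == 1%N) && (j == 0%N) then 1 else 0.
Definition y1 : dpT := fun i j => if (i == 0%N) && (j == 1%N) then 1 else 0.

Definition lincomb (cs gs : seq dpT) : dpT := fun i j =>
  \sum_(k < size gs) dmul (nth dzero cs k) (nth dzero gs k) i j.

Definition allD (p : nat) (s : seq dpT) : Prop :=
  forall k, (k < size s)%N -> inD p (nth dzero s k).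

Definition ideal_gen (p : nat) (gs : seq dpT) (f : dpT) : Prop :=
  exists cs : seq dpT, size cs = size gs /\ allD p cs /\ deq f (lincomb cs gs).

Definition generates (p : nat) (gs : seq dpT) (I : dpT -> Prop) : Prop :=
  allD p gs /\ forall f, I f <-> ideal_gen p gs f.

Definition fg_ideal (p : nat) (I : dpT -> Prop) : Prop :=
  exists gs : seq dpT, generates p gs I.

Definition syzygy (p : nat) (gs s : seq dpT) : Prop :=
  size s = size gs /\ allD p s /\ deq (lincomb s gs) dzero.

Definition in_submod (p : nat) (rels : seq (seq dpT)) (s : seq dpT) : Prop :=
  exists cs : seq dpT, size cs = size rels /\ allD p cs /\
    forall k, (k < size s)%N ->
      deq (nth dzero s k)
          (fun i j => \sum_(l < size rels)
                        dmul (nth dzero cs l) (nth dzero (nth [::] rels l) k) i j).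

Definition fp_ideal (p : nat) (I : dpT -> Prop) : Prop :=
  exists gs : seq dpT, generates p gs I /\
    exists rels : seq (seq dpT),
      (forall l, (l < size rels)%N -> syzygy p gs (nth [::] rels l)) /\
      (forall s, syzygy p gs s -> in_submod p rels s).

Definition xcomp (d : nat) (f : dpT) : dpT := fun i j => if i == d then f i j else 0.
Definition bicomp (d e : nat) (f : dpT) : dpT :=
  fun i j => if (i == d) && (j == e) then f i j else 0.

Definition x_homogeneous (I : dpT -> Prop) : Prop :=
  forall f, I f -> forall d, I (xcomp d f).
Definition bi_homogeneous (I : dpT -> Prop) : Prop :=
  forall f, I f -> forall d e, I (bicomp d e f).

Definition coherent (p : nat) : Prop :=
  forall I : dpT -> Prop, fg_ideal p I -> fp_ideal p I.
Definition x_graded_coherent (p : nat) : Prop :=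
  forall I : dpT -> Prop, x_homogeneous I -> fg_ideal p I -> fp_ideal p I.
Definition bi_graded_coherent (p : nat) : Prop :=
  forall I : dpT -> Prop, bi_homogeneous I -> fg_ideal p I -> fp_ideal p I.

(* Main.v *)
Require Import Defs.
From HB Require Import structures.
From mathcomp Require Import all_boot all_order all_algebra.
From mathcomp Require Import boolp ring.
From Stdlib Require Import FunctionalExtensionality.
Require Import Defs.
Set Implicit Arguments. Unset Strict Implicit. Unset Printing Implicit Defensive.
Import Order.TTheory GRing.Theory Num.Theory.
Local Open Scope ring_scope.

Lemma tri (R : nmodType) i (K : nat -> nat -> nat -> R) :
  \sum_(a < i.+1) \sum_(c < (i - a).+1) K a c (i - a - c)%N =
  \sum_(e < i.+1) \sum_(a < e.+1) K a (e - a)%N (i - e)%N.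
Proof.
elim: i K => [|i IH] K.
  by rewrite !big_ord_recl !big_ord0.
rewrite big_ord_recl.
have := IH (fun a c e => K a.+1 c e) => /= H.
transitivity (\sum_(c < (i.+1 - 0).+1) K 0%N c (i.+1 - 0 - c)%N +
  \sum_(e < i.+1) \sum_(a < e.+1) K a.+1 (e - a)%N (i - e)%N).
  congr (_ + _); rewrite -H; apply: eq_bigr => a _; by rewrite /bump /= add1n subSS.
rewrite [RHS]big_ord_recl /= big_ord1 !subn0.
under [X in _ = _ + X]eq_bigr do rewrite big_ord_recl.
rewrite big_split /= addrA; congr (_ + _).
by rewrite big_ord_recl.
Qed.

Lemma binA i a e : (a <= e)%N -> (e <= i)%N ->
  ('C(i, a) * 'C(i - a, e - a) = 'C(i, e) * 'C(e, a))%N.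
Proof.
move=> ae ei.
have ai := leq_trans ae ei.
have pos : (0 < a`! * (e - a)`! * (i - e)`!)%N by rewrite !muln_gt0 !fact_gt0.
apply/eqP; rewrite -(eqn_pmul2r pos); apply/eqP.
have h1 : ('C(i - a, e - a) * ((e - a)`! * (i - e)`!) = (i - a)`!)%N.
  have := @bin_fact (i - a) (e - a) (leq_sub2r a ei).
  by rewrite subnBA // subnK // => ->.
have h2 : ('C(i, a) * (a`! * (i - a)`!) = i`!)%N by exact: bin_fact.
have h3 : ('C(e, a) * (a`! * (e - a)`!) = e`!)%N by apply: bin_fact.
have h4 : ('C(i, e) * (e`! * (i - e)`!) = i`!)%N by apply: bin_fact.
transitivity ('C(i, a) * (a`! * ('C(i - a, e - a) * ((e - a)`! * (i - e)`!))))%N.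
  ring.
rewrite h1 h2 -h4 -h3.
ring.
Qed.

Definition cb (i a j b : nat) : rat := ('C(i, a) * 'C(j, b))%:R.

Lemma dmulE f g i j : dmul f g i j =
  \sum_(a < i.+1) \sum_(b < j.+1) cb i a j b * f a b * g (i - a)%N (j - b)%N.
Proof. by []. Qed.

Lemma dmulA_pt f g h i j : dmul f (dmul g h) i j = dmul (dmul f g) h i j.
Proof.
rewrite dmulE.
transitivity (\sum_(a < i.+1) \sum_(c < (i - a).+1) \sum_(b < j.+1) \sum_(d < (j - b).+1)
   (cb i a j b * f a b * (cb (i - a) c (j - b) d * g c d * h (i - a - c)%N (j - b - d)%N))).
  apply: eq_bigr => a _.
  rewrite exchange_big /=; apply: eq_bigr => b _.
  rewrite dmulE mulr_sumr; apply: eq_bigr => c _.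
  by rewrite mulr_sumr.
transitivity (\sum_(a < i.+1) \sum_(c < (i - a).+1) \sum_(e < j.+1) \sum_(b < e.+1)
   (cb i a j b * f a b * (cb (i - a) c (j - b) (e - b) * g c (e - b)%N * h (i - a - c)%N (j - e)%N))).
  apply: eq_bigr => a _; apply: eq_bigr => c _.
  exact: (tri j (fun b d e => cb i a j b * f a b * (cb (i - a) c (j - b) d * g c d * h (i - a - c)%N e))).
transitivity (\sum_(k < i.+1) \sum_(a < k.+1) \sum_(e < j.+1) \sum_(b < e.+1)
   (cb i a j b * f a b * (cb (i - a) (k - a) (j - b) (e - b) * g (k - a)%N (e - b)%N * h (i - k)%N (j - e)%N))).
  exact: (tri i (fun a c k => \sum_(e < j.+1) \sum_(b < e.+1)
   (cb i a j b * f a b * (cb (i - a) c (j - b) (e - b) * g c (e - b)%N * h k (j - e)%N)))).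
rewrite dmulE; apply: eq_bigr => k _.
transitivity (\sum_(e < j.+1) \sum_(a < k.+1) \sum_(b < e.+1)
   (cb i k j e * (cb k a e b * f a b * g (k - a)%N (e - b)%N) * h (i - k)%N (j - e)%N)); last first.
  apply: eq_bigr => e _; rewrite dmulE mulr_sumr mulr_suml; apply: eq_bigr => a _.
  by rewrite mulr_sumr mulr_suml.
rewrite exchange_big /=; apply: eq_bigr => e _; apply: eq_bigr => a _; apply: eq_bigr => b _.
have ak : (a <= k)%N by have := ltn_ord a.
have ki : (k <= i)%N by have := ltn_ord k.
have be : (b <= e)%N by have := ltn_ord b.
have ej : (e <= j)%N by have := ltn_ord e.
have E : cb i a j b * cb (i - a) (k - a) (j - b) (e - b) = cb i k j e * cb k a e b.
  rewrite /cb -!natrM; congr (_%:R).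
  transitivity (('C(i, a) * 'C(i - a, k - a)) * ('C(j, b) * 'C(j - b, e - b)))%N; first ring.
  rewrite binA // binA //; ring.
transitivity ((cb i a j b * cb (i - a) (k - a) (j - b) (e - b)) * f a b * g (k - a)%N (e - b)%N * h (i - k)%N (j - e)%N).
  by rewrite !mulrA; congr (_ * _); rewrite -!mulrA; congr (_ * _); rewrite mulrCA.
rewrite E.
  by rewrite !mulrA; congr (_ * _); rewrite -!mulrA; congr (_ * _); rewrite !subnBA // subnK // ?(leq_trans ak ki).
Qed.

Lemma dmulC_pt f g i j : dmul f g i j = dmul g f i j.
Proof.
rewrite !dmulE (reindex_inj rev_ord_inj) /=; apply: eq_bigr => a _.
rewrite (reindex_inj rev_ord_inj) /=; apply: eq_bigr => b _.
have ai : (a <= i)%N by have := ltn_ord a.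
have bj : (b <= j)%N by have := ltn_ord b.
rewrite !subSS !subKn // /cb !bin_sub //.
by rewrite -!mulrA; congr (_ * _); rewrite mulrC.
Qed.

Definition done_ : dpT := fun i j => if (i == 0%N) && (j == 0%N) then 1 else 0.

Lemma dmul1_pt f i j : dmul done_ f i j = f i j.
Proof.
rewrite dmulE big_ord_recl big_ord_recl /= big1 ?big1 /=.
- rewrite /cb !bin0 /done_ /= !subn0 !addr0. ring.
- by move=> a _; rewrite big1 // => b _; rewrite /done_ /= mulr0 mul0r.
- by move=> b _; rewrite /done_ /= mulr0 mul0r.
Qed.

Definition dadd (f g : dpT) : dpT := fun i j => f i j + g i j.
Definition dopp (f : dpT) : dpT := fun i j => - f i j.

Lemma dmulDl_pt f g h i j : dmul (dadd f g) h i j = dadd (dmul f h) (dmul g h) i j.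
Proof.
rewrite /dadd !dmulE -big_split; apply: eq_bigr => a _.
rewrite -big_split; apply: eq_bigr => b _; rewrite /dadd /=; ring.
Qed.

Definition dpr := dpT.
HB.instance Definition _ := Choice.on dpr.

Lemma daddA : associative (dadd : dpr -> dpr -> dpr).
Proof. by move=> f g h; apply: functional_extensionality => i; apply: functional_extensionality => j; rewrite /dadd addrA. Qed.
Lemma daddC : commutative (dadd : dpr -> dpr -> dpr).
Proof. by move=> f g; apply: functional_extensionality => i; apply: functional_extensionality => j; rewrite /dadd addrC. Qed.
Lemma dadd0 : left_id (dzero : dpr) dadd.
Proof. by move=> f; apply: functional_extensionality => i; apply: functional_extensionality => j; rewrite /dadd add0r. Qed.
Lemma daddN : left_inverse (dzero : dpr) dopp dadd.
Proof. by move=> f; apply: functional_extensionality => i; apply: functional_extensionality => j; rewrite /dadd /dopp addNr. Qed.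

HB.instance Definition _ := GRing.isZmodule.Build dpr daddA daddC dadd0 daddN.

Lemma dmulA : associative (dmul : dpr -> dpr -> dpr).
Proof. by move=> f g h; apply: functional_extensionality => i; apply: functional_extensionality => j; rewrite dmulA_pt. Qed.
Lemma dmulC : commutative (dmul : dpr -> dpr -> dpr).
Proof. by move=> f g; apply: functional_extensionality => i; apply: functional_extensionality => j; rewrite dmulC_pt. Qed.
Lemma dmul1 : left_id (done_ : dpr) dmul.
Proof. by move=> f; apply: functional_extensionality => i; apply: functional_extensionality => j; rewrite dmul1_pt. Qed.
Lemma dmulDl : left_distributive (dmul : dpr -> dpr -> dpr) dadd.
Proof. by move=> f g h; apply: functional_extensionality => i; apply: functional_extensionality => j; rewrite dmulDl_pt. Qed.
Lemma done_neq0 : (done_ : dpr) != dzero.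
Proof.
apply/eqP => /(congr1 (fun f : dpr => f 0%N 0%N)); rewrite /done_ /dzero /=.
by move/eqP; rewrite oner_eq0.
Qed.

HB.instance Definition _ := GRing.Zmodule_isComNzRing.Build dpr dmulA dmulC dmul1 dmulDl done_neq0.

Lemma evalD (f g : dpr) i j : (f + g) i j = f i j + g i j. Proof. by []. Qed.
Lemma evalN (f : dpr) i j : (- f) i j = - f i j. Proof. by []. Qed.
Lemma eval0 i j : (0 : dpr) i j = 0. Proof. by []. Qed.
Lemma evalM (f g : dpr) i j : (f * g) i j = dmul f g i j. Proof. by []. Qed.
Lemma evalB (f g : dpr) i j : (f - g) i j = f i j - g i j. Proof. by []. Qed.

Lemma evalS (I : Type) (r : seq I) (P : pred I) (F : I -> dpr) i j :
  (\sum_(k <- r | P k) F k) i j = \sum_(k <- r | P k) F k i j.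
Proof.
elim: r => [|x r IH]; first by rewrite !big_nil.
by rewrite !big_cons; case: (P x); rewrite ?evalD IH.
Qed.

Lemma deqE (f g : dpT) : deq f g -> f = g.
Proof. by move=> H; apply: functional_extensionality => i; apply: functional_extensionality => j. Qed.

Section Zp.
Variable p : nat.
Hypothesis hp : prime p.

Lemma ndvd_neq0 (b : nat) : ~~ (p %| b)%N -> b != 0%N.
Proof. by apply: contra => /eqP ->; rewrite dvdn0. Qed.

Lemma inZpP q : inZp p q <-> exists (a : int) (b : nat), ~~ (p %| b)%N /\ q = a%:~R / b%:R.
Proof.
split.
  move=> H; exists (numq q), `|denq q|%N; split => //.
  rewrite -[LHS]divq_num_den; congr (_ / _); by rewrite -[in LHS]absz_denq.
move=> [a [b [pb Hq]]].

have bn0 := ndvd_neq0 pb.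
have E : (numq q * b%:Z = a * denq q)%R.
  have : q = (numq q)%:~R / (denq q)%:~R by rewrite divq_num_den.
  rewrite {1}Hq => /eqP; rewrite eqr_div ?pnatr_eq0 ?intr_eq0 ?denq_eq0 //.
  have hb : (b%:R : rat) = (b%:Z)%:~R by [].
  rewrite hb -!intrM => /eqP H; have := intr_inj H => ->; ring.
have E2 : (`|numq q| * b = `|a| * `|denq q|)%N.
  by have := congr1 absz E; rewrite !abszM.
have dv : (`|denq q| %| `|numq q| * b)%N by rewrite E2 dvdn_mull.
rewrite Gauss_dvdr in dv; last by rewrite coprime_sym coprime_num_den.
rewrite /inZp; apply: contra pb => pd.
exact: dvdn_trans pd dv.
Qed.


Lemma inZpD x y : inZp p x -> inZp p y -> inZp p (x + y).
Proof.
move=> /inZpP [a1 [b1 [p1 ->]]] /inZpP [a2 [b2 [p2 ->]]].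
apply/inZpP; exists (a1 * b2%:Z + a2 * b1%:Z), (b1 * b2)%N; split.
  by rewrite Euclid_dvdM // negb_or p1 p2.
have h1 := ndvd_neq0 p1; have h2 := ndvd_neq0 p2.
rewrite natrM intrD !intrM; field.
by rewrite !pnatr_eq0 h1 h2.
Qed.

Lemma inZpM x y : inZp p x -> inZp p y -> inZp p (x * y).
Proof.
move=> /inZpP [a1 [b1 [p1 ->]]] /inZpP [a2 [b2 [p2 ->]]].
apply/inZpP; exists (a1 * a2), (b1 * b2)%N; split.
  by rewrite Euclid_dvdM // negb_or p1 p2.
have h1 := ndvd_neq0 p1; have h2 := ndvd_neq0 p2.
rewrite natrM intrM; field.
by rewrite !pnatr_eq0 h1 h2.
Qed.

Lemma inZpz (a : int) : inZp p a%:~R.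
Proof.
apply/inZpP; exists a, 1%N; split; last by rewrite divr1.
by rewrite dvdn1; apply/eqP => E; move: hp; rewrite E.
Qed.

Lemma inZpn (n : nat) : inZp p n%:R.
Proof. by have := inZpz n. Qed.

Lemma inZp0 : inZp p 0. Proof. exact: (inZpn 0). Qed.

Lemma inZpN x : inZp p x -> inZp p (- x).
Proof. by move=> h; rewrite -mulN1r; apply: inZpM => //; exact: (inZpz (-1)). Qed.

Lemma inZpS (I : Type) (r : seq I) (P : pred I) (F : I -> rat) :
  (forall k, P k -> inZp p (F k)) -> inZp p (\sum_(k <- r | P k) F k).
Proof.
move=> H; elim: r => [|x r IH]; first by rewrite big_nil; apply: inZp0.
by rewrite big_cons; case: ifP => // Px; apply: inZpD => //; apply: H.
Qed.

Lemma notinZp_pow M K : (M < K)%N -> ~ inZp p ((p ^ M)%:R / (p ^ K)%:R).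
Proof.
move=> MK.
have p0 : (0 < p)%N by apply: prime_gt0.
have E : (p ^ M)%:R / (p ^ K)%:R = (((p ^ (K - M))%N)%:Z)%:~R^-1 :> rat.
  rewrite -(subnKC (ltnW MK)) expnD natrM invfM mulrA divff ?mul1r.
    by rewrite subnKC ?(ltnW MK) // addnC addnK.
  by rewrite pnatr_eq0 -lt0n expn_gt0 p0.
rewrite /inZp E denqVz; last by rewrite eqz_nat -lt0n expn_gt0 p0.
apply/negP; rewrite negbK.
have : (0 < K - M)%N by rewrite subn_gt0.
case: (K - M)%N => // d _ /=; by rewrite expnS dvdn_mulr.
Qed.

End Zp.

Lemma mul_y1 (f : dpr) i j : (f * y1) i j = if j is j'.+1 then j%:R * f i j' else 0.
Proof.
rewrite mulrC evalM dmulE big_ord_recl [X in _ + X]big1 ?addr0; last first.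
  by move=> a _; apply: big1 => b _; rewrite /y1 /= mulr0 mul0r.
case: j => [|j].
  by rewrite big_ord1 /y1 /= mulr0 mul0r.
rewrite big_ord_recl big_ord_recl big1 /=.
  by rewrite /y1 /= /cb bin0 bin1 mulr0 mul0r add0r addr0 !subn0 subn1 /= mul1n mulr1.
by move=> b _; rewrite /y1 /= mulr0 mul0r.
Qed.

Lemma mul_x1 (f : dpr) i j : (f * x1) i j = if i is i'.+1 then i%:R * f i' j else 0.
Proof.
rewrite mulrC evalM dmulE.
case: i => [|i].
  by rewrite big_ord1; apply: big1 => b _; rewrite /x1 /= mulr0 mul0r.
rewrite big_ord_recl big_ord_recl [X in _ + (_ + X)]big1; last first.
  by move=> a _; apply: big1 => b _; rewrite /x1 /= mulr0 mul0r.
rewrite big1 ?add0r; last by move=> b _; rewrite /x1 /= mulr0 mul0r.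
rewrite big_ord_recl big1 /=.
  by rewrite /x1 /= /cb /bump /= bin0 bin1 !addr0 mulr1 subn0 subSS subn0 muln1.
by move=> b _; rewrite /x1 /= mulr0 mul0r.
Qed.

Section Closure.
Variable p : nat.
Hypothesis hp : prime p.

Lemma inD0 : inD p (0 : dpr).
Proof. split; first by move=> *; exact: (inZp0 hp). by exists 0%N. Qed.

Lemma eval1 i j : (1 : dpr) i j = done_ i j. Proof. by []. Qed.

Lemma inD1 : inD p (1 : dpr).
Proof.
split; first by move=> i j; rewrite eval1 /done_; case: ifP => _; [exact: (inZpn hp 1) | exact: (inZp0 hp)].
exists 1%N => i j; rewrite eval1 /done_; case: i => [|i]; case: j => [|j] //.
Qed.

Lemma inDD (f g : dpr) : inD p f -> inD p g -> inD p (f + g).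
Proof.
move=> [f1 [N1 f2]] [g1 [N2 g2]]; split.
  by move=> i j; rewrite evalD; apply: (inZpD hp).
exists (maxn N1 N2) => i j H; rewrite evalD f2 ?g2 ?addr0 //.
  by move: H; rewrite !geq_max => /orP [/andP [_ ->] | /andP [_ ->]]; rewrite ?orbT.
by move: H; rewrite !geq_max => /orP [/andP [-> _] | /andP [-> _]]; rewrite ?orbT.
Qed.

Lemma inDN (f : dpr) : inD p f -> inD p (- f).
Proof.
move=> [f1 [N1 f2]]; split; first by move=> i j; rewrite evalN; apply: (inZpN hp).
by exists N1 => i j H; rewrite evalN f2 ?oppr0.
Qed.

Lemma inDB (f g : dpr) : inD p f -> inD p g -> inD p (f - g).
Proof. by move=> *; apply: inDD => //; apply: inDN. Qed.

Lemma inDM (f g : dpr) : inD p f -> inD p g -> inD p (f * g).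
Proof.
move=> [f1 [N1 f2]] [g1 [N2 g2]]; split.
  move=> i j; rewrite evalM dmulE; apply: (inZpS hp) => a _; apply: (inZpS hp) => b _.
  by apply: (inZpM hp) => //; apply: (inZpM hp) => //; apply: (inZpn hp).
exists (N1 + N2)%N => i j H; rewrite evalM dmulE; apply: big1 => a _; apply: big1 => b _.
have ai : (a <= i)%N by have := ltn_ord a.
have bj : (b <= j)%N by have := ltn_ord b.
case: (boolP ((N1 <= a)%N || (N1 <= b)%N)) => [h|].
  by rewrite f2 // mulr0 mul0r.
rewrite negb_or -!ltnNge => /andP [aN bN].
rewrite g2 ?mulr0 //.
case/orP: H => H; apply/orP; [left|right]; rewrite leq_subRL //.
  by apply: leq_trans H; rewrite leq_add2r ltnW.
by apply: leq_trans H; rewrite leq_add2r ltnW.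
Qed.

Lemma inDS (I : Type) (r : seq I) (P : pred I) (F : I -> dpr) :
  (forall k, P k -> inD p (F k)) -> inD p (\sum_(k <- r | P k) F k).
Proof.
move=> H; elim: r => [|x r IH]; first by rewrite big_nil; apply: inD0.
by rewrite big_cons; case: ifP => // Px; apply: inDD => //; apply: H.
Qed.

Definition PM (M : nat) (f : dpr) : Prop :=
  (forall j, f 0%N j = 0) /\
  (forall i j, (0 < i)%N -> inZp p ((p ^ M)%:R * f i j / i%:R)).

Lemma PM0 M : PM M 0.
Proof. split => // i j _; rewrite eval0 mulr0 mul0r; exact: (inZp0 hp). Qed.

Lemma PMD M f g : PM M f -> PM M g -> PM M (f + g).
Proof.
move=> [f1 f2] [g1 g2]; split; first by move=> j; rewrite evalD f1 g1 addr0.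
move=> i j i0; rewrite evalD mulrDr mulrDl; exact: (inZpD hp) (f2 _ _ i0) (g2 _ _ i0).
Qed.

Lemma PMN M f : PM M f -> PM M (- f).
Proof.
move=> [f1 f2]; split; first by move=> j; rewrite evalN f1 oppr0.
move=> i j i0; rewrite evalN mulrN mulNr; exact: (inZpN hp) (f2 _ _ i0).
Qed.

Lemma PMB M f g : PM M f -> PM M g -> PM M (f - g).
Proof. by move=> *; apply: PMD => //; apply: PMN. Qed.

Lemma PMS M (I : Type) (r : seq I) (P : pred I) (F : I -> dpr) :
  (forall k, P k -> PM M (F k)) -> PM M (\sum_(k <- r | P k) F k).
Proof.
move=> H; elim: r => [|x r IH]; first by rewrite big_nil; apply: PM0.
by rewrite big_cons; case: ifP => // Px; apply: PMD => //; apply: H.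
Qed.

Lemma PM_mono M M' f : (M <= M')%N -> PM M f -> PM M' f.
Proof.
move=> MM [f1 f2]; split => // i j i0.
rewrite -(subnK MM) expnD natrM -!mulrA; apply: (inZpM hp); first exact: (inZpn hp).
by rewrite mulrA; apply: f2.
Qed.

Lemma PMM M (c f : dpr) : (forall i j, inZp p (c i j)) -> PM M f -> PM M (c * f).
Proof.
move=> hc [f1 f2]; split.
  move=> j; rewrite evalM dmulE big_ord1; apply: big1 => b _.
  by rewrite subnn f1 mulr0.
move=> i j i0; rewrite evalM dmulE mulr_sumr mulr_suml; apply: (inZpS hp) => a _.
rewrite mulr_sumr mulr_suml; apply: (inZpS hp) => b _.
have ai : (a <= i)%N by have := ltn_ord a.
case: (eqVneq (a : nat) i) => [ea|na].
  by rewrite ea subnn f1 !mulr0 mul0r; exact: (inZp0 hp).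
have ai' : (0 < i - a)%N by rewrite subn_gt0 ltn_neqAle na ai.
have E : (p ^ M)%:R * (cb i a j b * c a b * f (i - a)%N (j - b)%N) / i%:R =
   ('C(i.-1, a) * 'C(j, b))%:R * c a b * ((p ^ M)%:R * f (i - a)%N (j - b)%N / (i - a)%:R) :> rat.
  have hb : ('C(i, a))%:R / (i%:R) = ('C(i.-1, a))%:R / ((i - a)%N%:R) :> rat.
    apply/eqP; rewrite eqr_div ?pnatr_eq0 -?lt0n // -!natrM; apply/eqP; congr (_%:R).
    by rewrite mulnC -mul_bin_down mulnC.
  rewrite /cb !natrM.
  transitivity (('C(j, b))%:R * c a b * ((p ^ M)%:R * f (i - a)%N (j - b)%N) * (('C(i, a))%:R / (i%:R)) : rat).
    by rewrite !mulrA; field; rewrite pnatr_eq0 -lt0n.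
  by rewrite hb; field; rewrite pnatr_eq0 -lt0n.
rewrite E; apply: (inZpM hp) => //; last exact: f2.
by apply: (inZpM hp) => //; apply: (inZpn hp).
Qed.

End Closure.

Section Syz.
Variable p : nat.
Hypothesis hp : prime p.

Lemma inZp_powdiv N i : (0 < i)%N -> (i < N)%N -> inZp p ((p ^ N)%:R / i%:R).
Proof.
move=> i0 iN.
set v := logn p i.
have pv : (p ^ v %| i)%N by rewrite pfactor_dvdn.
have p1 : (1 < p)%N by apply: prime_gt1.
have p0 : (0 < p)%N by apply: prime_gt0.
have vN : (v < N)%N.
  apply: (leq_trans (ltn_expl v p1)); apply: leq_trans (dvdn_leq i0 pv) _.
  exact: ltnW.
set u := (i %/ p ^ v)%N.
have iu : i = (u * p ^ v)%N by rewrite divnK.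
have pu : ~~ (p %| u)%N.
  apply/negP => /dvdnP [w hw].
  have : (p ^ v.+1 %| i)%N by rewrite iu hw expnS -mulnA dvdn_mull.
  by rewrite pfactor_dvdn // ltnn.
apply/inZpP; exists (p ^ (N - v))%N%:Z, u; split => //.
have un0 : u != 0%N by apply: ndvd_neq0 pu.
have e : (p ^ N = p ^ (N - v) * p ^ v)%N by rewrite -expnD subnK // ltnW.
rewrite {1}iu e !natrM.
have -> : ((p ^ (N - v))%N%:Z)%:~R = ((p ^ (N - v))%N%:R : rat) by [].
field; rewrite pnatr_eq0 un0 /= pnatr_eq0 -lt0n expn_gt0 p0 //.
Qed.

Lemma syz_PM (f h : dpr) : inD p f -> f * y1 + h * x1 = 0 -> exists M, PM p M f.
Proof.
move=> [fZ [N fN]] E.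
exists N; split.
  move=> j.
  have := congr1 (fun g : dpr => g 0%N j.+1) E.
  rewrite /= evalD mul_y1 mul_x1 addr0 eval0 => /eqP.
  by rewrite mulf_eq0 pnatr_eq0 /= => /eqP.
move=> i j i0.
case: (ltnP i N) => iN.
  by rewrite mulrC mulrA; apply: (inZpM hp) => //; rewrite mulrC; apply: inZp_powdiv.
by rewrite fN ?iN // mulr0 mul0r; apply: (inZp0 hp).
Qed.

End Syz.

Definition nd (s : seq dpT) k : dpr := nth dzero s k.

Lemma lincombE cs gs : lincomb cs gs = \sum_(k < size gs) nd cs k * nd gs k.
Proof.
apply: functional_extensionality => i; apply: functional_extensionality => j.
by rewrite evalS.
Qed.

Lemma lin2 (c1 c2 : dpT) : lincomb [:: c1; c2] [:: y1; x1] = (c1 : dpr) * y1 + (c2 : dpr) * x1.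
Proof. by rewrite lincombE /= !big_ord_recl big_ord0 addr0. Qed.

Lemma eq_deq (f g : dpT) : f = g -> deq f g.
Proof. by move=> ->. Qed.

Lemma seq_choice (T : Type) (d : T) n (P : nat -> T -> Prop) :
  (forall k, (k < n)%N -> exists x, P k x) ->
  exists s, size s = n /\ forall k, (k < n)%N -> P k (nth d s k).
Proof.
elim: n => [|n IH] H; first by exists [::].
have [s [ss Hs]] : exists s, size s = n /\ forall k, (k < n)%N -> P k (nth d s k).
  by apply: IH => k kn; apply: H; apply: ltnW.
have [x Hx] := H n (ltnSn n).
exists (rcons s x); split; first by rewrite size_rcons ss.
move=> k; rewrite ltnS leq_eqVlt => /orP [/eqP ->|kn].
  by rewrite nth_rcons ss ltnn eqxx.
by rewrite nth_rcons ss kn; apply: Hs.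
Qed.

Section Main.
Variable p : nat.
Hypothesis hp : prime p.

Lemma PM_bound (F : nat -> dpr) m :
  (forall l, (l < m)%N -> exists M, PM p M (F l)) ->
  exists M, forall l, (l < m)%N -> PM p M (F l).
Proof.
elim: m => [|m IH] H; first by exists 0%N.
have [M1 H1] : exists M, forall l, (l < m)%N -> PM p M (F l).
  by apply: IH => l lm; apply: H; apply: ltnW.
have [M2 H2] := H m (ltnSn m).
exists (maxn M1 M2) => l; rewrite ltnS leq_eqVlt => /orP [/eqP ->|lm].
  by apply: (PM_mono hp _ H2); rewrite leq_maxr.
by apply: (PM_mono hp _ (H1 _ lm)); rewrite leq_maxl.
Qed.

Definition I := ideal_gen p [:: y1; x1].

Lemma allD2 (a b : dpT) : inD p a -> inD p b -> allD p [:: a; b].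
Proof. by move=> ha hb [|[|k]]. Qed.

Lemma Iy1 : I y1.
Proof.
exists [:: (1 : dpr); (0 : dpr)]; split => //; split.
  by apply: allD2; [apply: inD1 | apply: inD0].
by apply: eq_deq; rewrite lin2 mul1r mul0r addr0.
Qed.

Lemma Ix1 : I x1.
Proof.
exists [:: (0 : dpr); (1 : dpr)]; split => //; split.
  by apply: allD2; [apply: inD0 | apply: inD1].
by apply: eq_deq; rewrite lin2 mul1r mul0r add0r.
Qed.

Lemma I_inv f : I f -> exists a b : dpr, inD p a /\ inD p b /\ f = a * y1 + b * x1.
Proof.
move=> [[|a [|b [|c cs]]] [//= _ [hall hdeq]]].
exists a, b; split; first exact: (hall 0%N).
split; first exact: (hall 1%N).
by rewrite -lin2; apply: deqE.
Qed.

End Main.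

Section Main2.
Variable p : nat.
Hypothesis hp : prime p.

Lemma gen_self gs k : allD p gs -> (k < size gs)%N -> ideal_gen p gs (nd gs k).
Proof.
move=> allgs kn.
exists (mkseq (fun l => if l == k then (1 : dpr) else 0) (size gs)); split; first by rewrite size_mkseq.
split.
  move=> l; rewrite size_mkseq => ln; rewrite nth_mkseq //; case: ifP => _; [apply: (inD1 hp) | apply: (inD0 hp)].
apply: eq_deq; rewrite lincombE (bigD1 (Ordinal kn)) //= big1 ?addr0.
  by rewrite /nd nth_mkseq // eqxx mul1r.
move=> l /eqP lk; rewrite /nd nth_mkseq //; case: ifP => [/eqP e|_]; last by rewrite mul0r.
by exfalso; apply: lk; apply: val_inj.
Qed.

Definition eb (a b : nat) : dpr := fun i j => if (i == a) && (j == b) then 1 else 0.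

Lemma inD_eb a b : inD p (eb a b).
Proof.
split; first by move=> i j; rewrite /eb; case: ifP => _; [apply: (inZpn hp 1) | apply: (inZp0 hp)].
exists (maxn a b).+1 => i j H; rewrite /eb; case: ifP => // /andP [/eqP ei /eqP ej].
by move: H; rewrite ei ej !ltnNge leq_maxl leq_maxr.
Qed.

Lemma eb_syz N : (0 < N)%N -> eb N N.-1 * y1 + (- eb N.-1 N) * x1 = 0.
Proof.
case: N => // N _ /=.
apply: functional_extensionality => i; apply: functional_extensionality => j.
rewrite evalD mul_y1 mul_x1 eval0.
case: i => [|i]; case: j => [|j] //=; rewrite ?addr0 ?add0r /eb ?evalN //=.
- by rewrite mulr0.
- by case: (i == N); rewrite /= oppr0 mulr0.
rewrite !eqSS.
case: (eqVneq i N) => [->|ne]; case: (eqVneq j N) => [->|ne2] /=;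
  rewrite ?mulr1 ?mulr0 ?oppr0 ?subrr ?addr0 ?andbF.
all: by rewrite ?mulrN1 ?subrr.
Qed.

End Main2.

Section Main3.
Variable p : nat.
Hypothesis hp : prime p.

Lemma not_fp : ~ fp_ideal p (I p).
Proof.
move=> [gs [[allgs Hgen] [rels [Hrels Hcomp]]]].
set n := size gs; set m := size rels.
have [u [su [allu Eu]]] : ideal_gen p gs y1 by apply/Hgen; apply: Iy1.
have [v [sv [allv Ev]]] : ideal_gen p gs x1 by apply/Hgen; apply: Ix1.
move/deqE: Eu; rewrite lincombE => Eu.
move/deqE: Ev; rewrite lincombE => Ev.
pose P := fun k (x : dpr * dpr) => inD p x.1 /\ inD p x.2 /\ nd gs k = x.1 * y1 + x.2 * x1.
have [ab [sab Hab]] : exists ab : seq (dpr * dpr), size ab = n /\ forall k, (k < n)%N ->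
    P k (nth (0, 0) ab k).
  apply: (@seq_choice _ (0, 0) n P) => k kn.
  have : I p (nd gs k) by apply/Hgen; apply: gen_self.
  by move/I_inv => [a [b [ha [hb E]]]]; exists (a, b).
set A := fun k => (nth (0 : dpr, 0 : dpr) ab k).1.
set B := fun k => (nth (0 : dpr, 0 : dpr) ab k).2.
have inA : forall k, (k < n)%N -> inD p (A k) by move=> k /Hab [].
have inB : forall k, (k < n)%N -> inD p (B k) by move=> k /Hab [_ []].
have EG : forall k, (k < n)%N -> nd gs k = A k * y1 + B k * x1 by move=> k /Hab [_ []].
have Ht : forall l, (l < m)%N -> exists M, PM p M (\sum_(k < n) nd (nth [::] rels l) k * A k).
  move=> l lm; have [sr [allr Er]] := Hrels l lm.
  apply: (syz_PM hp (h := \sum_(k < n) nd (nth [::] rels l) k * B k)).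
    apply: (inDS hp) => k _; apply: (inDM hp) => //; last by apply: inA.
    by apply: allr; rewrite sr.
  rewrite !mulr_suml -big_split /=.
  move/deqE: Er; rewrite lincombE => Er.
  rewrite -[RHS]Er; apply: eq_bigr => k _.
  by rewrite EG // mulrDr !mulrA.
have [M1 HM1] := PM_bound hp Ht.
have [M2 HM2] : exists M, PM p M (\sum_(k < n) nd u k * A k - 1).
  apply: (syz_PM hp (h := \sum_(k < n) nd u k * B k)).
    apply: (inDB hp) => //; last by apply: (inD1 hp).
    apply: (inDS hp) => k _; apply: (inDM hp) => //; last by apply: inA.
    by apply: allu; rewrite su.
  rewrite mulrBl mul1r addrAC !mulr_suml -big_split /=.
  apply/eqP; rewrite subr_eq0; apply/eqP; rewrite [RHS]Eu; apply: eq_bigr => k _.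
  by rewrite EG // mulrDr !mulrA.
have [M3 HM3] : exists M, PM p M (\sum_(k < n) nd v k * A k).
  apply: (syz_PM hp (h := \sum_(k < n) nd v k * B k - 1)).
    apply: (inDS hp) => k _; apply: (inDM hp) => //; last by apply: inA.
    by apply: allv; rewrite sv.
  rewrite mulrBl mul1r addrA !mulr_suml -big_split /=.
  apply/eqP; rewrite subr_eq0; apply/eqP; rewrite [RHS]Ev; apply: eq_bigr => k _.
  by rewrite EG // mulrDr !mulrA.
set Aa := \sum_(k < n) nd u k * A k.
set Ba := \sum_(k < n) nd v k * A k.
set t := fun l => \sum_(k < n) nd (nth [::] rels l) k * A k.
pose M := (M1 + M2 + M3)%N.
have HM1' : forall l, (l < m)%N -> PM p M (t l).
  by move=> l lm; apply: (PM_mono hp _ (HM1 l lm)); rewrite /M -addnA leq_addr.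
have HM2' : PM p M (Aa - 1).
  by apply: (PM_mono hp _ HM2); rewrite /M addnAC leq_addl.
have HM3' : PM p M Ba.
  by apply: (PM_mono hp _ HM3); rewrite /M leq_addl.
pose N := (p ^ M.+1)%N.
have N0 : (0 < N)%N by rewrite expn_gt0 prime_gt0.
pose al := eb N N.-1.
pose be := - eb N.-1 N.
have inal : inD p al by apply: inD_eb.
have inbe : inD p be by apply: (inDN hp); apply: inD_eb.
pose w := mkseq (fun k => al * nd u k + be * nd v k) n.
have ndw : forall k, (k < n)%N -> nd w k = al * nd u k + be * nd v k.
  by move=> k kn; rewrite /nd /w nth_mkseq.
have syzw : syzygy p gs w.
  split; first by rewrite size_mkseq.
  split.
    move=> k; rewrite size_mkseq => kn; rewrite -/(nd w k) ndw //.
    apply: (inDD hp); apply: (inDM hp) => //; [apply: allu | apply: allv]; by rewrite ?su ?sv.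
  apply: eq_deq; rewrite lincombE.
  transitivity (\sum_(k < n) (al * (nd u k * nd gs k) + be * (nd v k * nd gs k))).
    by apply: eq_bigr => k _; rewrite ndw // mulrDl !mulrA.
  by rewrite big_split /= -!mulr_sumr -Eu -Ev eb_syz.
have [cs [scs [allcs Hw]]] := Hcomp w syzw.
have Hw' : forall k, (k < n)%N -> nd w k = \sum_(l < m) nd cs l * nd (nth [::] rels l) k.
  move=> k kn; apply: deqE => i j; have := Hw k; rewrite size_mkseq => /(_ kn) H; rewrite /nd H evalS.
  by apply: eq_bigr.
pose S := \sum_(k < n) nd w k * A k.
have S1 : S = al * Aa + be * Ba.
  rewrite /S /Aa /Ba !mulr_sumr -big_split /=; apply: eq_bigr => k _.
  by rewrite ndw // mulrDl !mulrA.
have S2 : S = \sum_(l < m) nd cs l * t l.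
  rewrite /S /t.
  transitivity (\sum_(k < n) \sum_(l < m) nd cs l * (nd (nth [::] rels l) k * A k)).
    by apply: eq_bigr => k _; rewrite Hw' // mulr_suml; apply: eq_bigr => l _; rewrite mulrA.
  by rewrite exchange_big /=; apply: eq_bigr => l _; rewrite mulr_sumr.
have Eal : al = S - be * Ba - al * (Aa - 1) by rewrite S1; ring.
have PMal : PM p M al.
  rewrite Eal; apply: (PMB hp); [apply: (PMB hp)|].
  - rewrite S2; apply: (PMS hp) => l _; apply: (PMM hp) => //; last by apply: HM1'.
    have : (l < size cs)%N by rewrite scs.
    by move=> /allcs [].
  - by apply: (PMM hp) => //; case: inbe.
  - by apply: (PMM hp) => //; case: inal.
have [_ P2] := PMal.
have := P2 N N.-1 N0.
rewrite /al /eb !eqxx /= mulr1.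
exact: (notinZp_pow hp (ltnSn M)).
Qed.

End Main3.

Section Main4.
Variable p : nat.
Hypothesis hp : prime p.

Definition mask (Q : nat -> nat -> bool) (f : dpT) : dpr := fun i j => if Q i j then f i j else 0.

Lemma inD_mask Q a : inD p a -> inD p (mask Q a).
Proof.
move=> [aZ [N aN]]; split.
  by move=> i j; rewrite /mask; case: ifP => _ //; apply: (inZp0 hp).
by exists N => i j H; rewrite /mask aN // if_same.
Qed.

Lemma I_mask Q f : I p f -> I p (mask Q f).
Proof.
move/I_inv => [a [b [ha [hb E]]]].
exists [:: (mask (fun i j => Q i j.+1) a : dpT); (mask (fun i j => Q i.+1 j) b : dpT)].
split => //; split; first by apply: allD2; apply: inD_mask.
apply: eq_deq; rewrite lin2 E.
apply: functional_extensionality => i; apply: functional_extensionality => j.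
rewrite /mask !evalD !mul_y1 !mul_x1.
case: i => [|i]; case: j => [|j] /=; case: ifP => //; rewrite ?mulr0 ?addr0 //.
Qed.

Lemma gen_I : generates p [:: y1; x1] (I p).
Proof.
split; last by [].
by apply: allD2; [exact: (inD_eb hp 0 1) | exact: (inD_eb hp 1 0)].
Qed.

End Main4.

Theorem mainTheorem4 (p : nat) (hp : prime p) :
  ~ fp_ideal p (ideal_gen p [:: y1; x1]) /\
  ~ x_graded_coherent p /\ ~ coherent p /\
  ~ bi_graded_coherent p.
Proof.
have nfp := not_fp hp.
have fg : fg_ideal p (I p) by exists [:: y1; x1]; apply: gen_I.
have xh : x_homogeneous (I p).
  by move=> f Hf d; exact: (I_mask hp (fun i _ => i == d) Hf).
have bh : bi_homogeneous (I p).
  by move=> f Hf d e; exact: (I_mask hp (fun i j => (i == d) && (j == e)) Hf).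
split => //; split; first by move=> H; apply: nfp; apply: H.
split; first by move=> H; apply: nfp; apply: H.
by move=> H; apply: nfp; apply: H.
Qed.
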